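(* Consider POWERSET MALIQUANT. The sequence starts at a heap of size one, and the first eight nim-values are, $0,0,1,0,2,1,4,8$. Otherwise, if $n=2k+1, k\ge 4$, then $\mathcal{SG}(n)=2^k$, and if $n\ge 10$ is even, then $\mathcal{SG}(n)=\mathcal{SG}(n/2)$.
   Context: POWERSET MALIQUANT is the impartial normal-play game on positive integer heaps where from a heap $n$ a player chooses any nonempty set of nondivisors $k$ of $n$ with $1\le k<n$ and moves to the disjunctive sum of those heaps; a heap with no such nondivisors is terminal. $\mathcal{SG}$ (nim-value) denotes the Sprague-Grundy value (mex rule, nim-sum). *)

(* Defs.v *)
From Stdlib Require Import PeanoNat.
From mathcomp Require Import all_boot.
Set Implicit Arguments. Unset Strict Implicit. Unset Printing Implicit Defensive.

Definition nondivs (n : nat) : seq nat := [seq k <- iota 1 n.-1 | ~~ (k %| n)].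

(* All subsequences (= subsets, since the input has no duplicates). *)
Fixpoint subseqs (s : seq nat) : seq (seq nat) :=
  match s with
  | [::] => [:: [::]]
  | x :: t => let r := subseqs t in r ++ map (cons x) r
  end.

Definition mex (s : seq nat) : nat := find (fun m => m \notin s) (iota 0 (size s).+1).

Definition nimsum (s : seq nat) : nat := foldr Nat.lxor 0 s.

(* Given the table t of nim-values of heaps 0..m-1, the nim-value of heap m:
   mex over all nonempty sets S of nondivisors k of m (1 <= k < m) of the
   nim-sum of the nim-values of the heaps in S (the disjunctive sum). *)
Definition sg_step (t : seq nat) (m : nat) : nat :=
  mex [seq nimsum [seq nth 0 t k | k <- A] | A <- subseqs (nondivs m) & A != [::]].

Fixpoint sg_table (n : nat) : seq nat :=
  match n with
  | 0 => [::]
  | n'.+1 => let t := sg_table n' in rcons t (sg_step t n')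
  end.

Definition SG (n : nat) : nat := nth 0 (sg_table n.+1) n.

(* Main.v *)
Require Import Defs.
From HB Require Import structures.
From Stdlib Require Import PeanoNat.
From mathcomp Require Import all_boot.
From mathcomp Require Import zify.

Lemma expn_pow m n : m ^ n = Nat.pow m n.
Proof. elim: n => [|n IH] //. by rewrite expnS IH /= multE. Qed.

Lemma size_sg_table n : size (sg_table n) = n.
Proof. by elim: n => //= n IH; rewrite size_rcons IH. Qed.

Lemma nth_sg_table n k : k < n -> nth 0 (sg_table n) k = SG k.
Proof.
elim: n => // n IH Hk.
case: (ltnP k n) => Hkn.
  by rewrite /= nth_rcons size_sg_table Hkn IH.
have -> : k = n by lia.
by [].
Qed.

Lemma SG_step n : SG n = sg_step (sg_table n) n.
Proof. by rewrite /SG /= nth_rcons size_sg_table ltnn eqxx. Qed.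

Lemma subseqs_sub s A : A \in subseqs s -> {subset A <= s}.
Proof.
elim: s A => [|x t IH] A /=.
  by rewrite inE => /eqP ->.
rewrite mem_cat => /orP [H|/mapP [B HB ->]] y.
  by move/(IH _ H); rewrite inE orbC => ->.
rewrite inE => /orP [/eqP ->|H]; first by rewrite inE eqxx.
by rewrite inE (IH _ HB _ H) orbT.
Qed.

Lemma filter_subseqs s (P : pred nat) : filter P s \in subseqs s.
Proof.
elim: s => [|x t IH] /=; first by rewrite inE.
case: (P x); rewrite mem_cat.
  by apply/orP; right; apply/map_f.
by rewrite IH.
Qed.

Lemma mem_nondivs n k : (k \in nondivs n) = (0 < k < n) && ~~ (k %| n).
Proof.
rewrite mem_filter mem_iota andbC.
case: n => [|n] /=; first by rewrite addn0; case: k => //=; lia.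
by congr (_ && _); lia.
Qed.

Lemma uniq_nondivs n : uniq (nondivs n).
Proof. by rewrite filter_uniq // iota_uniq. Qed.

HB.instance Definition _ := Monoid.isComLaw.Build nat 0 Nat.lxor
  (fun a b c => esym (Nat.lxor_assoc a b c)) Nat.lxor_comm Nat.lxor_0_l.

Lemma nimsum_perm s1 s2 : perm_eq s1 s2 -> nimsum s1 = nimsum s2.
Proof. by rewrite /nimsum !foldrE; apply: perm_big. Qed.

Lemma nimsum_bit s j : all (fun v => ~~ Nat.testbit v j) s ->
  Nat.testbit (nimsum s) j = false.
Proof.
elim: s => [|v s IH] /=; first by rewrite Nat.bits_0.
move=> /andP [h1 h2]; rewrite Nat.lxor_spec IH //.
by move/negbTE: h1 ->.
Qed.

Lemma mexE s m : (forall i, i < m -> i \in s) -> m \notin s -> mex s = m.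
Proof.
move=> H1 H2; rewrite /mex.
have Hsz : m <= size s.
  rewrite -(size_iota 0 m); apply: uniq_leq_size; first exact: iota_uniq.
  by move=> i; rewrite mem_iota add0n => /andP [_ /H1].
have hasP : has (fun m => m \notin s) (iota 0 (size s).+1).
  apply/hasP; exists m; last exact: H2. rewrite mem_iota; lia.
have Hj := hasP; rewrite has_find size_iota in Hj.
have Pj := nth_find 0 hasP; rewrite nth_iota // add0n in Pj.
apply/eqP; rewrite eqn_leq; apply/andP; split.
  rewrite leqNgt; apply/negP => Hmj.
  have := before_find 0 Hmj; rewrite nth_iota; last by rewrite ltnS.
  by rewrite add0n H2.
rewrite leqNgt; apply/negP => Hjm.
by move: Pj; rewrite H1.
Qed.

Lemma lxor_pow j y : y < 2 ^ j -> Nat.lxor (2 ^ j) y = 2 ^ j + y.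
Proof.
move=> Hy; rewrite -Nat.add_nocarry_lxor ?plusE //.
apply: Nat.bits_inj_0 => i; rewrite Nat.land_spec expn_pow Nat.pow2_bits_eqb.
case: (Nat.eqb_spec j i) => //= <-.
case: y Hy => [|y] Hy; first exact: Nat.bits_0.
apply: Nat.bits_above_log2; apply/Nat.log2_lt_pow2; first by apply/ltP.
by rewrite -expn_pow; apply/ltP.
Qed.

Definition Fo (a o : nat) : nat :=
  if o == 1 then (if 3 <= a then 8 else 0)
  else if o <= 7 then 2 ^ ((o - 3)./2) else 2 ^ (o./2).
Definition F (m : nat) : nat := Fo (logn 2 m) (m %/ 2 ^ logn 2 m).
Definition E (o : nat) : nat :=
  if o == 1 then 3 else if o <= 7 then (o - 3)./2 else o./2.

Lemma F_dec a o : odd o -> F (o * 2 ^ a) = Fo a o.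
Proof.
move=> Ho; have o0 : 0 < o by case: o Ho.
rewrite /F lognM // ?expn_gt0 // (logn_coprime (p:=2)) ?coprime2n //.
by rewrite pfactorK // add0n mulnK // expn_gt0.
Qed.

Lemma dec m : 0 < m -> exists a o, odd o /\ m = o * 2 ^ a.
Proof.
move=> m0; case: (pfactor_coprime (p:=2) (n:=m) _ m0) => // o.
by rewrite coprime2n => Ho E; exists (logn 2 m), o.
Qed.

Lemma Fo_E a o : Fo a o <> 0 -> Fo a o = 2 ^ E o.
Proof.
rewrite /Fo /E; case: (o == 1); last by case: (o <= 7).
by case: (3 <= a) => // _; reflexivity.
Qed.

Lemma Fo_shape a o : Fo a o = 0 \/ Fo a o = 2 ^ E o.
Proof. by case: (Fo a o =P 0) => [|/Fo_E]; [left|right]. Qed.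

Lemma E_inj o o' : odd o -> odd o' -> E o = E o' -> o = o'.
Proof. rewrite /E; case: (o =P 1); case: (o' =P 1); case: (leqP o 7); case: (leqP o' 7); lia. Qed.

Lemma FoI a b o o' : odd o -> odd o' -> Fo a o = Fo b o' -> Fo a o <> 0 -> o = o'.
Proof.
move=> Ho Ho' Heq Hnz.
have Hnz' : Fo b o' <> 0 by rewrite -Heq.
apply: E_inj => //; apply: (@expnI 2) => //.
by rewrite -(Fo_E _ _ Hnz) -(Fo_E _ _ Hnz').
Qed.

Lemma odd_dvd c o a : odd c -> c %| o * 2 ^ a -> c %| o.
Proof.
move=> Hc; rewrite mulnC Gauss_dvdr //.
by apply: coprimeXr; rewrite coprimen2.
Qed.

Lemma not_dvd_high c o a b : odd o -> a < b -> ~~ (c * 2 ^ b %| o * 2 ^ a).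
Proof.
move=> Ho Hab; apply/negP => H.
have H2 : 2 ^ a.+1 %| o * 2 ^ a.
  apply: dvdn_trans H; apply: dvdn_trans (dvdn_mull c (dvdnn _)).
  by apply: dvdn_exp2l.
move: H2; rewrite expnS dvdn_pmul2r ?expn_gt0 // dvdn2 Ho.
by [].
Qed.

Lemma witness c o a : odd o -> odd c -> c < o * 2 ^ a -> (c %| o -> c < o) ->
  exists b, (c * 2 ^ b < o * 2 ^ a) && ~~ (c * 2 ^ b %| o * 2 ^ a).
Proof.
move=> Ho Hc Hlt Hco.
case Hd: (c %| o * 2 ^ a); last first.
  by exists 0; rewrite expn0 muln1 Hlt Hd.
have co : c %| o by apply: odd_dvd Hd.
have Hco' := Hco co.
case/dvdnP: co => q Eq.
exists a.+1; rewrite not_dvd_high // andbT.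
have Hq : odd q by move: Ho; rewrite Eq oddM => /andP [].
have t0 : 0 < 2 ^ a by rewrite expn_gt0.
rewrite expnS Eq.
move: Hco'; rewrite Eq => Hco'.
have Hq3 : 2 < q.
  by move: Hq Hco'; case: q {Eq} => [|[|[|q]]] //=; rewrite ?mul0n ?mul1n ?ltnn.
have u0 : 0 < c * 2 ^ a by rewrite muln_gt0 t0 andbT; case: c Hc {Hlt Hco Hd Eq Hco'}.
by rewrite mulnCA -mulnA ltn_pmul2r.
Qed.

Definition R n := [seq nimsum (map F A) | A <- subseqs (nondivs n) & A != [::]].

Lemma SG_R n : (forall k, 0 < k < n -> SG k = F k) -> SG n = mex (R n).
Proof.
move=> IH; rewrite SG_step /sg_step /R; congr mex.
apply/eq_in_map => A; rewrite mem_filter => /andP [_ HA].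
congr nimsum; apply/eq_in_map => k Hk.
have := subseqs_sub _ _ HA _ Hk; rewrite mem_nondivs => /andP [Hk1 _].
rewrite nth_sg_table ?IH //; lia.
Qed.

Lemma reach_of n W : uniq W -> {subset W <= nondivs n} -> W != [::] ->
  nimsum (map F W) \in R n.
Proof.
move=> HU HS HW.
set A := filter (fun k => k \in W) (nondivs n).
have HP : perm_eq A W.
  apply: uniq_perm => //; first by rewrite filter_uniq // uniq_nondivs.
  move=> y; rewrite mem_filter; case Hy: (y \in W) => //=; exact: HS.
apply/mapP; exists A.
  rewrite mem_filter filter_subseqs andbT.
  apply/eqP => HA; have := perm_size HP; rewrite HA /=.
  by case: (W) HW.
by apply: nimsum_perm; rewrite perm_sym; apply: perm_map.
Qed.

Lemma comb n j : (forall i, i < j -> exists w, w \in nondivs n /\ F w = 2 ^ i) ->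
  forall j', j' <= j -> forall x, x < 2 ^ j' -> exists W,
   [/\ uniq W, {subset W <= nondivs n}, (forall w, w \in W -> F w < 2 ^ j')
     & nimsum (map F W) = x].
Proof.
move=> Hw; elim=> [|j' IH] Hj x Hx.
  exists [::]; split => //.
  by rewrite expn0 in Hx; case: x Hx.
have p0 : 0 < 2 ^ j' by rewrite expn_gt0.
case: (ltnP x (2 ^ j')) => Hxj.
  have [W [U S B N]] := IH (ltnW Hj) x Hxj.
  exists W; split => // w /B H; rewrite expnS; lia.
have [w [Hw1 Hw2]] := Hw j' Hj.
have [W [U S B N]] : exists W,
   [/\ uniq W, {subset W <= nondivs n}, (forall w, w \in W -> F w < 2 ^ j')
     & nimsum (map F W) = x - 2 ^ j'].
  by apply: IH; [exact: ltnW | rewrite expnS in Hx; lia].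
exists (w :: W); split.
- rewrite /= U andbT; apply/negP => /B; by rewrite Hw2 ltnn.
- by move=> y; rewrite inE => /orP [/eqP ->|/S].
- move=> y; rewrite inE => /orP [/eqP ->|/B]; rewrite expnS; [rewrite Hw2|]; lia.
- rewrite /= Hw2 N lxor_pow; [lia | rewrite expnS in Hx; lia].
Qed.

Lemma base_check : all (fun m => SG m == F m) (iota 1 9).
Proof. by vm_compute. Qed.

Lemma SG_F n : 0 < n -> SG n = F n.
Proof.
elim/ltn_ind: n => n IH n0.
case: (leqP n 9) => Hn.
  move/allP: base_check => /(_ n); rewrite mem_iota => H.
  by apply/eqP; apply: H; lia.
have IH' : forall k, 0 < k < n -> SG k = F k.
  by move=> k /andP [k0 kn]; apply: IH.
rewrite (SG_R _ IH').
have [a [o [Ho En]]] := dec _ n0.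
have o0 : 0 < o by case: (o) Ho.
have t0 : 0 < 2 ^ a by rewrite expn_gt0.
have Fn : F n = Fo a o by rewrite En F_dec.
have Hnz : Fo a o <> 0.
  rewrite /Fo; case: (o =P 1) => [Eo|_]; last first.
    by case: (o <= 7); apply/eqP; rewrite expn_eq0.
  have -> : 3 <= a => //.
  rewrite leqNgt; apply/negP => Ha; move: Hn; rewrite En Eo mul1n.
  have : 2 ^ a <= 2 ^ 2 by rewrite leq_exp2l //; lia.
  lia.
rewrite Fn (Fo_E _ _ Hnz).
set j := E o.
have Hmem : forall w, 0 < w -> w < n -> ~~ (w %| n) -> w \in nondivs n.
  by move=> w w0 wn wd; rewrite mem_nondivs w0 wn wd.
apply: mexE.
- move=> x Hx; case: (posnP x) => [->|x0].
  have pair : forall w1 w2, w1 != w2 -> w1 \in nondivs n -> w2 \in nondivs n ->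
      F w1 = F w2 -> 0 \in R n.
    move=> w1 w2 Hne H1 H2 Feq.
    have := @reach_of n [:: w1; w2].
    rewrite /= Feq Nat.lxor_0_r Nat.lxor_nilpotent; apply => //.
      by rewrite inE Hne.
    by move=> y; rewrite !inE => /orP [/eqP->|/eqP->].
  have n12 : 2 <= a -> 3 <= o -> 12 <= n.
    move=> Ha Ho3; rewrite En.
    have : 2 ^ 2 <= 2 ^ a by rewrite leq_exp2l.
    move=> H4; have := leq_mul Ho3 H4; lia.
  case: (leqP a 1) => Ha.
    suff -> : 0 = nimsum (map F [:: 4]).
      apply: reach_of => //; move=> y; rewrite inE => /eqP ->.
      apply: Hmem; [by [] | lia | rewrite En].
      have [->|->] : a = 0 \/ a = 1 by lia.
        by rewrite expn0; lia.
      by rewrite expn1; lia.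
    by vm_compute.
  have nd : forall c, odd c -> ~~ (c %| o) -> ~~ (c %| n).
    by move=> c Hc Hco; rewrite En; apply/negP => /(odd_dvd _ _ _ Hc); apply/negP.
  have nd2 : forall c, ~~ (c %| n) -> ~~ (c * 2 %| n).
    by move=> c Hc; apply/negP => H; move/negP: Hc; apply; apply: dvdn_trans H; apply: dvdn_mulr.
  case: (boolP (3 %| o)) => H3; last first.
    apply: (pair 3 6) => //; apply: Hmem => //; try lia.
      exact: nd.
    exact: (nd2 3 (nd 3 isT H3)).
  have o3 : 3 <= o by apply: dvdn_leq.
  case: (boolP (5 %| o)) => H5; last first.
    apply: (pair 5 10) => //; apply: Hmem => //; try lia.
      exact: nd.
    exact: (nd2 5 (nd 5 isT H5)).
  have H15 : 15 %| o by rewrite (@Gauss_dvd 3 5) ?H3 ?H5.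
  have o15 : 15 <= o by apply: dvdn_leq.
  apply: (pair (3 * 2 ^ a.+1) (3 * 2 ^ a.+2)).
  - rewrite !expnS; apply/eqP; lia.
  - apply: Hmem; first by rewrite muln_gt0 expn_gt0.
      by rewrite En expnS mulnA ltn_pmul2r //; lia.
    by rewrite En not_dvd_high.
  - apply: Hmem; first by rewrite muln_gt0 expn_gt0.
      by rewrite En !expnS !mulnA ltn_pmul2r //; lia.
    by rewrite En not_dvd_high.
  - by rewrite !F_dec.
  have Hw : forall i, i < j -> exists w, w \in nondivs n /\ F w = 2 ^ i.
    move=> i Hi.
    have gen : forall c, odd c -> 3 <= c -> (forall b, Fo b c = 2 ^ i) ->
        (c < o \/ (o = 1 /\ c < n)) -> exists w, w \in nondivs n /\ F w = 2 ^ i.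
      move=> c Hc c3 Fc Hlt.
      have P1 : c < o * 2 ^ a.
        by rewrite -En; case: Hlt => [H|[_ H]] //; apply: leq_trans H _; rewrite En leq_pmulr.
      have P2 : c %| o -> c < o.
        move=> Hco; case: Hlt => [//|[Eo _]]; move: Hco; rewrite Eo dvdn1; lia.
      have [b /andP [Hb1 Hb2]] := witness c o a Ho Hc P1 P2.
      exists (c * 2 ^ b); split; last by rewrite F_dec.
      apply: Hmem; [rewrite muln_gt0 expn_gt0 andbT; lia | by rewrite En | by rewrite En].
    have Hlt : forall c, c <= 7 \/ c = i.*2.+1 -> (i == 0) && (c == 3) || (i == 1) && (c == 5) || (i == 2) && (c == 7) || (3 < i) && (c == i.*2.+1) -> (c < o \/ (o = 1 /\ c < n)).
      move=> c Hc7 Hic; move: Hi; rewrite /j /E; case: (o =P 1) => [Eo|Eo].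
        by move=> Hi; right; split => //; lia.
      by left; move: Hi; case: (leqP o 7); lia.
    case: (i =P 3) => [Ei|Ei3].
      have o9 : 9 <= o.
        by move: Hi; rewrite /j /E Ei; case: (o =P 1); case: (leqP o 7); lia.
      exists (1 * 2 ^ (a + 3)); split.
        apply: Hmem; first by rewrite mul1n expn_gt0.
          by rewrite En expnD mul1n mulnC ltn_pmul2r //; lia.
        by rewrite En not_dvd_high //; lia.
      rewrite F_dec // Ei /Fo eqxx leq_addl; reflexivity.
    case: (ltnP i 3) => Hi3.
      have [Ei|[Ei|Ei]] : i = 0 \/ i = 1 \/ i = 2 by lia.
      + by apply: (gen 3) => //; [move=> b; rewrite Ei; reflexivity | apply: Hlt; lia].
      + by apply: (gen 5) => //; [move=> b; rewrite Ei; reflexivity | apply: Hlt; lia].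
      + by apply: (gen 7) => //; [move=> b; rewrite Ei; reflexivity | apply: Hlt; lia].
    apply: (gen i.*2.+1); [lia | lia | | apply: Hlt; lia].
    move=> b; rewrite /Fo.
    have -> : (i.*2.+1 == 1) = false by apply/eqP; lia.
    have -> : (i.*2.+1 <= 7) = false by lia.
    by have -> : (i.*2.+1)./2 = i by lia.
  have [W [U S _ N]] := comb _ _ Hw _ (leqnn j) _ Hx.
  rewrite -N; apply: reach_of => //; apply/eqP => W0; move: N; rewrite W0 /=; lia.
- apply/mapP => [[A]]; rewrite mem_filter => /andP [HA0 HA] Hx.
  have : Nat.testbit (2 ^ j) j = false.
    rewrite Hx; apply: nimsum_bit; apply/allP => v /mapP [k Hk ->].
    have Hkn := subseqs_sub _ _ HA _ Hk.
    move: (Hkn); rewrite mem_nondivs => /andP [/andP [k0 kn] kd].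
    have [b [o' [Ho' Ek]]] := dec _ k0.
    have Fk : F k = Fo b o' by rewrite Ek F_dec.
    case: (Fo_shape b o') => H.
      by rewrite Fk H Nat.bits_0.
    rewrite Fk H expn_pow Nat.pow2_bits_eqb.
    case: (Nat.eqb_spec (E o') j) => // Ej.
    exfalso.
    have Feq : Fo a o = Fo b o' by rewrite (Fo_E _ _ Hnz) H Ej.
    have Eoo := FoI _ _ _ _ Ho Ho' Feq Hnz.
    have Hba : b <= a.
      rewrite leqNgt; apply/negP => Hab.
      move: kn; rewrite En Ek -Eoo ltn_pmul2l // ltn_exp2l //; lia.
    move: kd; rewrite En Ek -Eoo.
    by rewrite dvdn_pmul2l // dvdn_exp2l.
  by rewrite expn_pow Nat.pow2_bits_true.
Qed.

Theorem mainTheorem16 :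
  [/\ [:: SG 1; SG 2; SG 3; SG 4; SG 5; SG 6; SG 7; SG 8] = [:: 0; 0; 1; 0; 2; 1; 4; 8],
      (forall k : nat, 4 <= k -> SG (2 * k + 1) = 2 ^ k) &
      (forall n : nat, 10 <= n -> ~~ odd n -> SG n = SG (n %/ 2))].
Proof.
split.
- by vm_compute.
- move=> k Hk; rewrite SG_F; last by lia.
  have Hodd : odd (2 * k + 1) by lia.
  have -> : 2 * k + 1 = (2 * k + 1) * 2 ^ 0 by rewrite expn0 muln1.
  rewrite F_dec // /Fo.
  have -> : (2 * k + 1 == 1) = false by apply/eqP; lia.
  have -> : (2 * k + 1 <= 7) = false by lia.
  by have -> : (2 * k + 1)./2 = k by lia.
- move=> n Hn Hev.
  rewrite !SG_F; [|lia|lia].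
  have n0 : 0 < n by lia.
  have [a [o [Ho En]]] := dec _ n0.
  case: a En => [|a] En.
    by move: Hev; rewrite En expn0 muln1 Ho.
  have -> : n %/ 2 = o * 2 ^ a by rewrite En expnS mulnCA mulKn.
  rewrite En !F_dec // /Fo.
  case: (o =P 1) => // Eo.
  have Ha : 3 <= a.
    rewrite leqNgt; apply/negP => Ha; move: Hn; rewrite En Eo mul1n.
    have : 2 ^ a.+1 <= 2 ^ 3 by rewrite leq_exp2l.
    lia.
  by rewrite Ha (leq_trans Ha (leqnSn a)).
Qed.
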